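(* Let $r>1$ and $0\le\theta\le\frac{\pi}{2}$. Then all four roots (counted with multiplicity) of the equation $$ re^{-i\theta}w^4-w^3+w-re^{i\theta}=0 $$ in the variable $w\in\mathbb{C}$ lie on the unit circle $\{w:|w|=1\}$. *)

(* Defs.v *)
From Stdlib Require Import Reals.
From Coquelicot Require Export Coquelicot.
Open Scope R_scope.

Definition cexpi (t : R) : C := (cos t, sin t).

Definition quartic (r th : R) (w : C) : C :=
  (RtoC r * cexpi (- th) * Cpow w 4 - Cpow w 3 + w - RtoC r * cexpi th)%C.

(* Main.v *)
Require Import Defs.
From Stdlib Require Import Reals Lra Psatz.
From Coquelicot Require Import Coquelicot.
Open Scope R_scope.

Lemma key (r c s x y R0 I0 : R) (hr : 1 < r) (hcs : c*c + s*s = 1)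
  (hR : R0 = 0) (hI : I0 = 0)
  (eR : R0 = r * c * ((x*x-y*y)*(x*x-y*y) - (2*x*y)*(2*x*y)) + r * s * ((x*x-y*y)*(2*x*y) + (2*x*y)*(x*x-y*y))
        - (x*(x*x-y*y) - y*(2*x*y)) + x - r * c)
  (eI : I0 = r * c * ((x*x-y*y)*(2*x*y) + (2*x*y)*(x*x-y*y)) - r * s * ((x*x-y*y)*(x*x-y*y) - (2*x*y)*(2*x*y))
        - (x*(2*x*y) + y*(x*x-y*y)) + y - r * s) :
  x*x + y*y = 1.
Proof.
  set (m := x*x + y*y).
  set (P := c*(x*x-y*y) + 2*s*x*y).
  set (Q := 2*c*x*y - s*(x*x-y*y)).
  assert (hPQ : P*P + Q*Q = m*m).
  { unfold P, Q, m. transitivity ((c*c+s*s)*((x*x+y*y)*(x*x+y*y))); [ring|]. rewrite hcs; ring. }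
  assert (hRe : (m-1)*(r*(m+1)*P - x*m) = (x*x-y*y)*R0 + 2*x*y*I0).
  { unfold m, P; rewrite eR, eI. ring. }
  assert (hIm : r*(m*m+1)*Q - y*m*(m+1) = (x*x-y*y)*I0 - 2*x*y*R0).
  { unfold m, Q; rewrite eR, eI. ring. }
  rewrite hR, hI in hRe, hIm.
  assert (hm : 0 < m).
  { destruct (Req_dec m 0) as [h0|h0].
    - exfalso. assert (x = 0) by (unfold m in h0; nra). assert (y = 0) by (unfold m in h0; nra).
      subst x y. rewrite eR in hR; rewrite eI in hI. nra.
    - unfold m in *; nra. }
  destruct (Req_dec m 1) as [h1|h1]; [exact h1|exfalso].
  assert (hX : r*(m+1)*P = x*m).
  { assert (m - 1 <> 0) by lra. apply Rmult_eq_reg_l with (m-1); [|assumption]. lra. }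
  assert (hY : r*(m*m+1)*Q = y*m*(m+1)) by lra.
  assert (hsum : (m+1)*(m+1)*((r*(m+1)*P)*(r*(m+1)*P)) + (r*(m*m+1)*Q)*(r*(m*m+1)*Q) = m*m*m*(m+1)*(m+1)).
  { rewrite hX, hY. transitivity (m*m*(m+1)*(m+1)*(x*x+y*y)); [ring|]. fold m. ring. }
  assert (i1 : (m+1)*(m+1)*(m+1)*(m+1)*(P*P) >= (m+1)*(m+1)*m*(P*P)).
  { apply Rmult_ge_compat_r; [nra|]. nra. }
  assert (i2 : (m*m+1)*(m*m+1)*(Q*Q) >= (m+1)*(m+1)*m*(Q*Q)).
  { apply Rmult_ge_compat_r; [nra|].
    assert (E : (m*m+1)*(m*m+1) - (m+1)*(m+1)*m = (m-1)*(m-1)*(m*m+m+1)) by ring.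
    assert (0 <= (m-1)*(m-1)*(m*m+m+1)) by (apply Rmult_le_pos; nra). lra. }
  assert (i3 : m*m*m*(m+1)*(m+1) >= r*r*((m+1)*(m+1)*m*(m*m))).
  { rewrite <- hsum.
    replace ((m+1)*(m+1)*m*(m*m)) with ((m+1)*(m+1)*m*(P*P+Q*Q)) by (rewrite hPQ; ring).
    assert (Eq : (m+1)*(m+1)*((r*(m+1)*P)*(r*(m+1)*P)) + (r*(m*m+1)*Q)*(r*(m*m+1)*Q)
       = r*r*((m+1)*(m+1)*(m+1)*(m+1)*(P*P) + (m*m+1)*(m*m+1)*(Q*Q))) by ring.
    rewrite Eq. apply Rmult_ge_compat_l; [nra|]. lra. }
  assert (0 < (m+1)*(m+1)*m*(m*m)) by (apply Rmult_lt_0_compat; nra).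
  replace (m*m*m*(m+1)*(m+1)) with ((m+1)*(m+1)*m*(m*m)) in i3 by ring.
  set (K := (m+1)*(m+1)*m*(m*m)) in *.
  assert (1 < r*r) by nra. nra.
Qed.

Theorem theorem3p3 (r th : R) (hr : 1 < r) (hth0 : 0 <= th) (hth1 : th <= PI / 2)
  (w : C) : quartic r th w = 0%C -> Cmod w = 1.
Proof.
  intro H. destruct w as [x y].
  assert (hR : fst (quartic r th (x,y)) = 0) by (rewrite H; reflexivity).
  assert (hI : snd (quartic r th (x,y)) = 0) by (rewrite H; reflexivity).
  assert (hcs : cos th * cos th + sin th * sin th = 1).
  { pose proof (sin2_cos2 th) as E; unfold Rsqr in E; lra. }
  assert (h1 : x*x + y*y = 1).
  { eapply (key r (cos th) (sin th) x y _ _ hr hcs hR hI).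
    - unfold quartic, cexpi; simpl. rewrite cos_neg, sin_neg. ring.
    - unfold quartic, cexpi; simpl. rewrite cos_neg, sin_neg. ring. }
  unfold Cmod; simpl. replace (x * (x * 1) + y * (y * 1)) with 1 by lra. apply sqrt_1.
Qed.
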